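(* In the setting described in the context, suppose $K\in\mathbb{R}^{m\times n}$ and a symmetric $P\in\mathbb{R}^{n\times n}$ with $P>0$ satisfy $P-(A+BK)P(A+BK)^\top>0$ for all $(A,B)\in\Sigma$. Then $\operatorname{im}\begin{bmatrix} I\\ K\end{bmatrix}\subseteq\operatorname{im}\begin{bmatrix} X_-\\ U_-\end{bmatrix}$.
   Context: Consider the system $x(t+1)=A_sx(t)+B_su(t)+w(t)$ with unknown $A_s\in\mathbb{R}^{n\times n}$, $B_s\in\mathbb{R}^{n\times m}$ and unknown noise $w$. Data: $X_+=[x(1)\ \cdots\ x(T)]$, $X_-=[x(0)\ \cdots\ x(T-1)]$, $U_-=[u(0)\ \cdots\ u(T-1)]$, with $X_+=A_sX_-+B_sU_-+W_-$ where $W_-=[w(0)\ \cdots\ w(T-1)]$ satisfies $\begin{bmatrix} I\\ W_-^\top\end{bmatrix}^\top\begin{bmatrix}\Phi_{11} & \Phi_{12}\\ \Phi_{12}^\top & \Phi_{22}\end{bmatrix}\begin{bmatrix} I\\ W_-^\top\end{bmatrix}\ge0$ for known $\Phi_{11}=\Phi_{11}^\top\in\mathbb{R}^{n\times n}$, $\Phi_{12}\in\mathbb{R}^{n\times T}$, $\Phi_{22}=\Phi_{22}^\top\in\mathbb{R}^{T\times T}$, $\Phi_{22}<0$. $\Sigma$ is the set of all $(A,B)\in\mathbb{R}^{n\times n}\times\mathbb{R}^{n\times m}$ such that $X_+=AX_-+BU_-+W$ for some $W\in\mathbb{R}^{n\times T}$ satisfying the same noise inequality (so $(A_s,B_s)\in\Sigma$).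 *)

(* Defs.v *)
From HB Require Import structures.
From mathcomp Require Import all_boot all_order all_algebra.
From mathcomp Require Import reals.
Set Implicit Arguments. Unset Strict Implicit. Unset Printing Implicit Defensive.
Import Order.TTheory GRing.Theory Num.Theory.
Local Open Scope ring_scope.

Definition psd (R : realType) (k : nat) (M : 'M[R]_k) : Prop :=
  M^T = M /\ forall x : 'cV[R]_k, 0 <= (x^T *m M *m x) 0 0.

Definition pd (R : realType) (k : nat) (M : 'M[R]_k) : Prop :=
  M^T = M /\ forall x : 'cV[R]_k, x != 0 -> 0 < (x^T *m M *m x) 0 0.

Definition nd (R : realType) (k : nat) (M : 'M[R]_k) : Prop := pd (- M).

Definition noise_ok (R : realType) (n T : nat)
  (Phi11 : 'M[R]_n) (Phi12 : 'M[R]_(n, T)) (Phi22 : 'M[R]_T)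
  (W : 'M[R]_(n, T)) : Prop :=
  psd ((col_mx (1%:M : 'M[R]_n) W^T)^T
        *m block_mx Phi11 Phi12 Phi12^T Phi22
        *m col_mx (1%:M : 'M[R]_n) W^T).

Definition in_Sigma (R : realType) (n m T : nat)
  (Xp Xm : 'M[R]_(n, T)) (Um : 'M[R]_(m, T))
  (Phi11 : 'M[R]_n) (Phi12 : 'M[R]_(n, T)) (Phi22 : 'M[R]_T)
  (A : 'M[R]_n) (B : 'M[R]_(n, m)) : Prop :=
  exists W : 'M[R]_(n, T), Xp = A *m Xm + B *m Um + W /\ noise_ok Phi11 Phi12 Phi22 W.

(* Main.v *)
Require Import Defs.
From HB Require Import structures.
From mathcomp Require Import all_boot all_order all_algebra.
From mathcomp Require Import reals.
From mathcomp Require Import ring lra.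
Import Order.TTheory GRing.Theory Num.Theory.
Local Open Scope ring_scope.

Lemma addE (R : realType) p k (A B : 'M[R]_(p, k)) i j : (A + B) i j = A i j + B i j.
Proof. by rewrite mxE. Qed.
Lemma sclE (R : realType) p k (a : R) (A : 'M[R]_(p, k)) i j : (a *: A) i j = a * A i j.
Proof. by rewrite mxE. Qed.

Lemma oppE (R : realType) p k (A : 'M[R]_(p, k)) i j : (- A) i j = - A i j.
Proof. by rewrite mxE. Qed.

Lemma scal_contra (R : realType) (a be g q : R) :
  0 < q -> (forall t, 0 < a - (be + t * g + t ^+ 2 * q)) -> False.
Proof.
move=> hq Ht.
have H0 := Ht 0.
have hr : 0 < a - be by move: H0; rewrite mul0r expr0n /= mul0r !addr0.
pose t := (a - be) / q + 1.
have htq : t * q = (a - be) + q by rewrite /t mulrDl mulfVK ?mul1r // gt_eqF.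
have ht1 : 1 <= t by rewrite /t lerDr divr_ge0 // ltW.
have H1 := Ht t; have H2 := Ht (- t).
move: H1 H2; rewrite !expr2 => H1 H2.
nra.
Qed.

Lemma quad_expand (R : realType) (n : nat) (b d : 'cV[R]_n) (P : 'M[R]_n) (t : R) :
  ((b + t *: d)^T *m P *m (b + t *: d)) 0 0 =
  (b^T *m P *m b) 0 0 + t * ((b^T *m P *m d) 0 0 + (d^T *m P *m b) 0 0)
  + t ^+ 2 * (d^T *m P *m d) 0 0.
Proof.
rewrite [(_ + _)^T]linearD /= !mulmxDl !mulmxDr [(t *: d)^T]linearZ /= -!scalemxAl -!scalemxAr. rewrite !addE !sclE.
move: ((b^T *m P *m b) 0 0) ((b^T *m P *m d) 0 0) ((d^T *m P *m b) 0 0) ((d^T *m P *m d) 0 0) => x1 x2 x3 x4.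
ring.
Qed.

Theorem mainTheorem12 (R : realType) (n m T : nat)
  (Xp Xm : 'M[R]_(n, T)) (Um : 'M[R]_(m, T))
  (Phi11 : 'M[R]_n) (Phi12 : 'M[R]_(n, T)) (Phi22 : 'M[R]_T)
  (As : 'M[R]_n) (Bs : 'M[R]_(n, m)) (Wm : 'M[R]_(n, T))
  (K : 'M[R]_(m, n)) (P : 'M[R]_n) :
  Phi11^T = Phi11 -> Phi22^T = Phi22 -> nd Phi22 ->
  Xp = As *m Xm + Bs *m Um + Wm -> noise_ok Phi11 Phi12 Phi22 Wm ->
  P^T = P -> pd P ->
  (forall (A : 'M[R]_n) (B : 'M[R]_(n, m)),
      in_Sigma Xp Xm Um Phi11 Phi12 Phi22 A B ->
      pd (P - (A + B *m K) *m P *m (A + B *m K)^T)) ->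
  (* im [I; K] \subseteq im [X_-; U_-]  (column spaces, via row spaces of transposes) *)
  ((col_mx (1%:M : 'M[R]_n) K)^T <= (col_mx Xm Um)^T)%MS.
Proof.
move=> _ _ _ HXp Hnoise _ [_ HP] Hrob.
set X := col_mx 1%:M K; set Y := col_mx Xm Um.
apply/negPn/negP => Hn; rewrite submxE in Hn.
move: Hn; set C := cokermx _ => Hn.
have [[j i] /= Hji] : {ji : 'I_n * 'I_(n+m) | (X^T *m C) ji.1 ji.2 != 0}.
  case: (pickP (fun ji : 'I_n * 'I_(n+m) => (X^T *m C) ji.1 ji.2 != 0)) => [ji Hji|H0].
    by exists ji.
  exfalso; move/eqP: Hn; apply; apply/matrixP => a b; rewrite [RHS]mxE.
  by move: (H0 (a, b)) => /= /negbFE/eqP.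
set u : 'cV[R]_(n+m) := delta_mx i 0.
set y : 'cV[R]_n := delta_mx j 0.
set d := X^T *m C *m u.
have dnz : d != 0.
  have dj : d j 0 = (X^T *m C) j i by rewrite /d /u -colE mxE.
  apply/eqP => /matrixP/(_ j 0); rewrite dj [RHS]mxE => H.
  by rewrite H eqxx in Hji.
have ynz : y != 0.
  apply/eqP => /matrixP/(_ j 0); rewrite /y !mxE !eqxx /= => /eqP.
  by rewrite oner_eq0.
have yTy : y^T *m y = 1%:M.
  rewrite /y trmx_delta mul_delta_mx; apply/matrixP => a b.
  by rewrite !mxE !ord1.
set E := C^T.
set M := As + Bs *m K.
have EY : E *m Y = 0 by rewrite /E -[Y]trmxK -trmx_mul mulmx_coker trmx0.
have EX : E *m X = lsubmx E + rsubmx E *m K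
  by rewrite -{1}[E]hsubmxK mul_row_col mulmx1.
have HQ : forall t : R, 0 < (y^T *m P *m y) 0 0
   - ((M^T *m y + t *: d)^T *m P *m (M^T *m y + t *: d)) 0 0.
  move=> t.
  set Z : 'M[R]_(n, n+m) := t *: (y *m u^T).
  have := Hrob (As + Z *m lsubmx E) (Bs + Z *m rsubmx E).
  case.
    exists Wm; split => //; rewrite HXp; congr (_ + _).
    have H0 : Z *m lsubmx E *m Xm + Z *m rsubmx E *m Um = 0.
      by rewrite -!mulmxA -mulmxDr -mul_row_col hsubmxK EY mulmx0.
    by rewrite !mulmxDl addrACA H0 addr0.
  move=> _ /(_ y ynz).
  have EN : (As + Z *m lsubmx E) + (Bs + Z *m rsubmx E) *m K = M + Z *m (E *m X).
    by rewrite EX mulmxDr mulmxDl -mulmxA addrACA.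
  rewrite EN.
  have NTy : (M + Z *m (E *m X))^T *m y = M^T *m y + t *: d.
    rewrite linearD /= mulmxDl; congr (_ + _).
    rewrite !trmx_mul /E trmxK /Z linearZ /= trmx_mul trmxK.
    by rewrite -scalemxAr -scalemxAl -!mulmxA yTy mulmx1 /d !mulmxA.
  set N := M + Z *m (E *m X).
  have -> : y^T *m (P - N *m P *m N^T) *m y
      = y^T *m P *m y - (N^T *m y)^T *m P *m (N^T *m y).
    by rewrite mulmxBr mulmxBl trmx_mul trmxK !mulmxA.
  by rewrite NTy addE oppE.
pose a := (y^T *m P *m y) 0 0.
pose b := M^T *m y.
pose be := (b^T *m P *m b) 0 0.
pose g := (b^T *m P *m d) 0 0 + (d^T *m P *m b) 0 0.
pose q := (d^T *m P *m d) 0 0.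
have hq : 0 < q by apply: HP.
have Ht : forall t, 0 < a - (be + t * g + t ^+ 2 * q).
  by move=> t; rewrite -quad_expand; apply: HQ.
exact: (@scal_contra R a be g q hq Ht).
Qed.
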